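(* Let $a\ge 2$ be an integer, $p$ a prime and $n\ge 1$ an integer. Then $$N=\frac{a^{p^n}-1}{a^{p^{n-1}}-1}$$ is primover to base $a$ if and only if $\gcd\bigl(N,\,a^{p^{n-1}}-1\bigr)=1$.
   Context: For an integer $a>1$ and an odd integer $n>1$ with $\gcd(a,n)=1$: $h_a(n)$ denotes the multiplicative order of $a$ modulo $n$. A cyclotomic coset of $a$ modulo $n$ is a set of the form $\{\, s a^j \bmod n : j\ge 0\,\}$ with $s\in\{1,\dots,n-1\}$; these cosets partition $\{1,\dots,n-1\}$, and $r_a(n)$ denotes the number of distinct cyclotomic cosets of $a$ modulo $n$. An odd composite number $n$ coprime to $a$ is called an overpseudoprime to base $a$ if $n=r_a(n)\,h_a(n)+1$. An integer $N>1$ is called primover to base $a$ if it is either prime or an overpseudoprime to base $a$. *)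

(* Defs.v *)
From mathcomp Require Import all_boot.
Set Implicit Arguments. Unset Strict Implicit. Unset Printing Implicit Defensive.

(* multiplicative order of a modulo n: the least k > 0 with a^k = 1 mod n
   (0 if none exists, which does not happen when coprime a n and n > 1). *)
Definition ord_mod (a n : nat) : nat :=
  if n <= 1 then 1 else
  let P := fun k => (0 < k) && (a ^ k == 1 %[mod n]) in
  head 0 [seq k <- iota 1 n | P k].

Definition mul_mod (n a : nat) (Hn : 0 < n) (x : 'I_n) : 'I_n :=
  Ordinal (ltn_pmod (x * a) Hn).

Definition cyc_coset (n a : nat) (Hn : 0 < n) (s : 'I_n) : {set 'I_n} :=
  [set i | fconnect (mul_mod a Hn) s i].

Definition num_cosets (a n : nat) : nat :=
  match n as m return m = n -> nat with
  | 0 => fun _ => 0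
  | m.+1 => fun _ =>
      #| [set cyc_coset a (ltn0Sn m) s | s : 'I_m.+1 & 0 < val s] |
  end erefl.

Definition overpseudoprime (a n : nat) : Prop :=
  odd n /\ 1 < n /\ ~~ prime n /\ coprime a n /\
  n = num_cosets a n * ord_mod a n + 1.

Definition primover (a N : nat) : Prop :=
  1 < N /\ (prime N \/ overpseudoprime a N).

(* Main.v *)
Require Import Defs.
From mathcomp Require Import all_boot.
From mathcomp Require Import cyclic.
Set Implicit Arguments. Unset Strict Implicit. Unset Printing Implicit Defensive.


Lemma head_filter (T : Type) (x0 : T) (P : pred T) (s : seq T) :
  head x0 (filter P s) = nth x0 s (find P s).
Proof. by elim: s => //= x s IH; case: (P x). Qed.

Lemma totient_le n : totient n <= n.
Proof.
rewrite totient_count_coprime.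
apply: leq_trans (_ : \sum_(0 <= d < n) 1 <= n).
  by apply: leq_sum => i _; case: (coprime _ _).
by rewrite sum_nat_const_nat subn0 muln1.
Qed.

Lemma ord_mod_spec a N : 1 < N -> coprime a N ->
  [/\ 0 < ord_mod a N, a ^ ord_mod a N == 1 %[mod N] &
      forall k, 0 < k -> k < ord_mod a N -> a ^ k != 1 %[mod N]].
Proof.
move=> N1 cop; rewrite /ord_mod (leqNgt N 1) N1 /= head_filter.
set P := fun k => _.
have hasP : has P (iota 1 N).
  apply/hasP; exists (totient N).
    by rewrite mem_iota totient_gt0 (ltn_trans _ N1) //= add1n ltnS totient_le.
  by rewrite /P totient_gt0 (ltn_trans _ N1) //=; apply/eqP/Euler_exp_totient.
have iN : find P (iota 1 N) < N by rewrite -{2}(size_iota 1 N) -has_find.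
have := nth_find 0 hasP; rewrite nth_iota // => /andP[h0 h1].
split => //.
move=> k k0 kh.
have lt : k.-1 < find P (iota 1 N) by rewrite -ltnS prednK // -add1n.
have := before_find 0 lt.
rewrite nth_iota; last by apply: ltn_trans iN.
rewrite add1n prednK // /P k0 /= => ->; done.
Qed.

Lemma ordP a m e : 0 < e -> a ^ e == 1 %[mod m] ->
  (forall k, 0 < k -> k < e -> a ^ k != 1 %[mod m]) ->
  forall k, (a ^ k == 1 %[mod m]) = (e %| k).
Proof.
move=> e0 He Hmin k.
have -> : (a ^ k == 1 %[mod m]) = (a ^ (k %% e) == 1 %[mod m]).
  rewrite {1}(divn_eq k e) (mulnC (k %/ e)) expnD expnM -modnMml -modnXm (eqP He) modnXm exp1n modnMml mul1n.
  by [].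
rewrite /dvdn; case: (posnP (k %% e)) => [->|r0]; first by rewrite expn0 eqxx.
by rewrite (negbTE (Hmin _ r0 (ltn_pmod _ e0))).
Qed.

Lemma iter_mul a n (Hn : 0 < n) k (x : 'I_n) :
  val (iter k (mul_mod a Hn) x) = x * a ^ k %% n.
Proof.
elim: k => [|k IH]; first by rewrite expn0 muln1 modn_small.
by rewrite iterS /= IH modnMml expnSr mulnA.
Qed.


Section Per.
Variables (T : finType) (f : T -> T) (h : nat).
Hypothesis h0 : 0 < h.
Hypothesis per : forall x, iter h f x = x.

Lemma per_inj : injective f.
Proof.
move=> x y fxy; rewrite -(per x) -(per y) -(prednK h0) !iterSr fxy //.
Qed.

Lemma order_le_per x m : 0 < m -> iter m f x = x -> order f x <= m.
Proof.
move=> m0 Hm; rewrite /order.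
rewrite -(size_traject f x m); apply: leq_trans (card_size _); apply/subset_leq_card/subsetP=> y.
rewrite inE => /iter_findex <-; apply/trajectP.
exists (findex f x y %% m); first by rewrite ltn_pmod.
have Hq q : iter (q * m) f x = x.
  by elim: q => [|q IH] //; rewrite mulSn iterD IH Hm.
by rewrite {1}(divn_eq (findex f x y) m) addnC iterD Hq.
Qed.

Lemma order_eq_per x m : 0 < m -> iter m f x = x ->
  (forall k, 0 < k -> k < m -> iter k f x != x) -> order f x = m.
Proof.
move=> m0 Hm Hmin; apply/eqP; rewrite eqn_leq order_le_per //=.
rewrite leqNgt; apply/negP => lt.
by have := Hmin _ (order_gt0 f x) lt; rewrite (iter_order per_inj) eqxx.
Qed.
End Per.


Lemma card_coset a n (Hn : 0 < n) s :
  #|cyc_coset a Hn s| = order (mul_mod a Hn) s.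
Proof. by rewrite /order /cyc_coset; apply: eq_card => i; rewrite inE. Qed.

Lemma sum_cosets m a h : 0 < h ->
  (forall x : 'I_m.+1, iter h (mul_mod a (ltn0Sn m)) x = x) ->
  (forall (s : 'I_m.+1) k, 0 < val s -> 0 < val (iter k (mul_mod a (ltn0Sn m)) s)) ->
  m = \sum_(C in [set cyc_coset a (ltn0Sn m) s | s : 'I_m.+1 & 0 < val s]) #|C|.
Proof.
move=> h0 per pos; set f := mul_mod a (ltn0Sn m).
set D := [set s : 'I_m.+1 | 0 < val s].
have cD : #|D| = m.
  have -> : D = [set~ ord0].
    by apply/setP => i; rewrite !inE lt0n.
  by rewrite cardsC1 card_ord.
have inj := per_inj h0 per.
have -> : [set cyc_coset a (ltn0Sn m) s | s : 'I_m.+1 & 0 < val s] =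
          equivalence_partition (fconnect f) D.
  apply: eq_in_imset => s; rewrite !inE => s0.
  apply/setP => y; rewrite !inE; case Hc: (fconnect f s y); rewrite ?andbF ?andbT //.
  by move/iter_findex: Hc => <-; rewrite pos.
rewrite -{1}cD; apply: card_partition; apply: equivalence_partitionP.
move=> x y z _ _ _; split; first exact: connect0.
move=> Hxy; apply/idP/idP; first by apply: connect_trans; rewrite fconnect_sym.
exact: connect_trans.
Qed.


Lemma exists_prime N s x : 0 < s -> s < N -> N %| s * x ->
  exists2 q, prime q & (q %| N) && (q %| x).
Proof.
move=> s0 sN dv; set g := gcdn s N.
have g0 : 0 < g by rewrite gcdn_gt0 s0.
have dN : N = N %/ g * g by rewrite divnK // dvdn_gcdr.
have ds : s = s %/ g * g by rewrite divnK // dvdn_gcdl.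
set d := N %/ g in dN *; set s' := s %/ g in ds *.
have cop : coprime d s'.
  rewrite /coprime; apply/eqP; apply/eqP; rewrite -(eqn_pmul2r g0) mul1n.
  by rewrite muln_gcdl -dN -ds gcdnC.
have dx : d %| x.
  rewrite -(Gauss_dvdr _ cop) -(dvdn_pmul2r g0) -dN.
  by rewrite mulnAC -ds.
have d1 : 1 < d.
  rewrite ltnNge; apply/negP => d1.
  have gs : g <= s by apply: dvdn_leq => //; apply: dvdn_gcdl.
  move: d1 dN; rewrite leq_eqVlt ltnS leqn0 => /orP[/eqP->|/eqP->].
    by rewrite mul1n => NE; move: sN; rewrite NE ltnNge gs.
  by rewrite mul0n => NE; move: sN; rewrite NE.
exists (pdiv d); first exact: pdiv_prime.
rewrite (dvdn_trans (pdiv_dvd d) dx) andbT.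
by rewrite dN dvdn_mulr // pdiv_dvd.
Qed.

Lemma pord a p n N q k : 1 <= a -> prime p -> 1 <= n -> prime q -> q %| N ->
  coprime N (a ^ (p ^ n.-1) - 1) -> a ^ (p ^ n) == 1 %[mod q] ->
  0 < k -> a ^ k == 1 %[mod q] -> p ^ n %| k.
Proof.
move=> a1 pp n1 qp qN cop Hpn k0 Hk.
pose P := fun j => (0 < j) && (a ^ j == 1 %[mod q]).
have exP : exists j, P j by exists (p ^ n); rewrite /P expn_gt0 prime_gt0.
case: (ex_minnP exP) => e /andP[e0 He] Hmin.
have Hmin' : forall j, 0 < j -> j < e -> a ^ j != 1 %[mod q].
  move=> j j0 je; apply/negP => Hj.
  by have := Hmin j; rewrite /P j0 Hj => /(_ isT); rewrite leqNgt je.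
have ordq := ordP e0 He Hmin'.
have : e %| p ^ n by rewrite -ordq.
case/(dvdn_pfactor _ _ pp) => j jn ej.
have jE : j = n.
  apply/eqP; rewrite eqn_leq jn /= leqNgt; apply/negP => jl.
  have : a ^ (p ^ n.-1) == 1 %[mod q].
    rewrite ordq ej; apply: dvdn_exp2l; rewrite -ltnS prednK //.
  rewrite eqn_mod_dvd; last by rewrite expn_gt0 a1.
  move=> qb; have : q %| gcdn N (a ^ (p ^ n.-1) - 1) by rewrite dvdn_gcd qN qb.
  by rewrite (eqP cop) dvdn1 => /eqP q1; move: (prime_gt1 qp); rewrite q1.
by rewrite -jE -ej -ordq.
Qed.

Lemma Narith b p : 2 <= b -> 2 <= p ->
  let N := (b ^ p - 1) %/ (b - 1) in
  [/\ (b - 1) * N = b ^ p - 1, b < N & exists t, N = t * b + 1].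
Proof.
move=> b2 p2 N.
have b1 : 0 < b - 1 by rewrite subn_gt0.
have E : N = \sum_(i < p) b ^ i.
  by rewrite /N !subn1 predn_exp mulKn // -subn1.
split.
- by rewrite mulnC /N divnK // !subn1 predn_exp dvdn_mulr.
- rewrite E; clear E N; case: p p2 => [|[|p']] // _.
  rewrite big_ord_recl /= big_ord_recl /=.
  by rewrite expn0 expn1 addnA addnC add1n ltn_addl.
- rewrite E; clear E N; case: p p2 => [|p'] // _.
  exists (\sum_(i < p') b ^ i).
  rewrite big_ord_recl /= expn0 addnC; congr (_ + 1).
  rewrite big_distrl /=; apply: eq_bigr => i _.
  by rewrite /bump /= add1n expnSr.
Qed.


Lemma cosets_iff m a : 0 < m -> coprime a m.+1 ->
  (m.+1 = num_cosets a m.+1 * ord_mod a m.+1 + 1) <->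
  (forall s : 'I_m.+1, 0 < val s ->
     order (mul_mod a (ltn0Sn m)) s = ord_mod a m.+1).
Proof.
move=> m0 cop; have N1 : 1 < m.+1 by [].
case: (ord_mod_spec N1 cop) => h0 hE hmin.
set h := ord_mod a m.+1 in h0 hE hmin *.
set f := mul_mod a (ltn0Sn m).
have per : forall x, iter h f x = x.
  move=> x; apply: val_inj; rewrite iter_mul -modnMmr (eqP hE) (modn_small N1).
  by rewrite muln1 modn_small.
have pos : forall (s : 'I_m.+1) k, 0 < val s -> 0 < val (iter k f s).
  move=> s k s0; rewrite iter_mul lt0n; apply/negP => /eqP H.
  have : m.+1 %| s * a ^ k by rewrite /dvdn H.
  rewrite Gauss_dvdl; last by rewrite coprime_sym coprimeXl.
  by move/(dvdn_leq s0); rewrite leqNgt ltn_ord.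
have Hsum := sum_cosets h0 per pos.
set P := [set cyc_coset a (ltn0Sn m) s | s : 'I_m.+1 & 0 < val s] in Hsum *.
have Hle : forall C, C \in P -> #|C| <= h.
  by move=> C /imsetP[s _ ->]; rewrite card_coset order_le_per.
rewrite /num_cosets /= -/P.
split.
- move=> E s s0; apply/eqP; rewrite eqn_leq order_le_per //= leqNgt.
  apply/negP => lt.
  have C0 : cyc_coset a (ltn0Sn m) s \in P by apply/imsetP; exists s; rewrite ?inE.
  have S1 : \sum_(C in P) h = \sum_(C in P) #|C| + \sum_(C in P) (h - #|C|).
    by rewrite -big_split /=; apply: eq_bigr => C CP; rewrite subnKC // Hle.
  have S2 : \sum_(C in P) h = m + \sum_(C in P) (h - #|C|).
    by rewrite S1; congr (_ + _); apply: esym; exact: Hsum.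
  have Em : m = #|P| * h by move: E; rewrite addn1 => -[].
  have S3 : \sum_(C in P) (h - #|C|) = 0.
    by apply/eqP; rewrite -(eqn_add2l m) addn0 -S2 sum_nat_const -Em.
  move: S3; rewrite (bigD1 _ C0) /= card_coset => /eqP.
  by rewrite addn_eq0 subn_eq0 leqNgt lt.
- move=> H; rewrite addn1; congr _.+1.
  have -> : #|P| * h = \sum_(C in P) #|C|.
    rewrite -sum_nat_const; apply: eq_bigr => C /imsetP[s]; rewrite inE => s0 ->.
    by rewrite card_coset H.
  exact: Hsum.
Qed.


Lemma core a p n N : 2 <= a -> prime p -> 1 <= n ->
  (a ^ (p ^ n.-1) - 1) * N = a ^ (p ^ n) - 1 ->
  a ^ (p ^ n.-1) < N -> coprime a N ->
  (primover a N <-> coprime N (a ^ (p ^ n.-1) - 1)).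
Proof.
move=> a2 pp n1 EN bN cop.
have a1 : 0 < a by apply: ltnW.
have pn0 : 0 < p ^ n.-1 by rewrite expn_gt0 prime_gt0.
set b := a ^ (p ^ n.-1) in EN bN *.
have b2 : 1 < b by rewrite /b -(expn0 a) ltn_exp2l.
have b1 : 0 < b - 1 by rewrite subn_gt0.
have N1 : 1 < N by apply: ltn_trans bN.
have Npn : a ^ (p ^ n) == 1 %[mod N].
  by rewrite eqn_mod_dvd ?expn_gt0 ?a1 // -EN dvdn_mull.
case: N EN bN cop N1 Npn => [|m] // EN bN cop N1 Npn.
have m0 : 0 < m by [].
case: (ord_mod_spec N1 cop) => h0 hE hmin.
set h := ord_mod a m.+1 in h0 hE hmin *.
set f := mul_mod a (ltn0Sn m).
have per : forall x, iter h f x = x.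
  move=> x; apply: val_inj; rewrite iter_mul -modnMmr (eqP hE) (modn_small N1).
  by rewrite muln1 modn_small.
have bm : b - 1 < m.+1 by apply: leq_ltn_trans (leq_subr 1 b) bN.
split.
- case=> _ Hor; apply/negPn/negP => ncop.
  set g := gcdn m.+1 (b - 1).
  have g1 : 1 < g.
    rewrite ltn_neqAle eq_sym ncop /= gcdn_gt0 b1 orbT //.
  have qp := pdiv_prime g1.
  have qN : pdiv g %| m.+1 by apply: dvdn_trans (pdiv_dvd g) (dvdn_gcdl _ _).
  have qb : pdiv g %| b - 1 by apply: dvdn_trans (pdiv_dvd g) (dvdn_gcdr _ _).
  set q := pdiv g in qp qN qb.
  have qlt : q < m.+1 by apply: leq_ltn_trans bm; apply: dvdn_leq.
  case: Hor => [Pr | [_ [_ [_ [_ E]]]]].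
    by move: qN; rewrite (dvdn_prime2 qp Pr) ltn_eqF.
  have Hall := proj1 (cosets_iff m0 cop) E.
  have sl : m.+1 %/ q < m.+1 by rewrite ltn_Pdiv // prime_gt1.
  pose s := Ordinal sl.
  have s0 : 0 < val s by rewrite /= divn_gt0 ?prime_gt0 // dvdn_leq.
  have Hs : iter (p ^ n.-1) f s = s.
    apply: val_inj; rewrite iter_mul /= -/b.
    have eb : b = (b - 1) %/ q * q + 1 by rewrite divnK // subnK // ltnW.
    rewrite eb mulnDr muln1 mulnCA divnK // modnMDl modn_small //.
  have := order_le_per pn0 Hs; rewrite Hall // => hle.
  have : m.+1 %| a ^ h - 1 by rewrite -eqn_mod_dvd ?expn_gt0 ?a1.
  have ah : 0 < a ^ h - 1 by rewrite subn_gt0 -{1}(expn0 a) ltn_exp2l.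
  move/(dvdn_leq ah) => le1.
  have : a ^ h - 1 <= b - 1 by rewrite leq_sub2r // leq_pexp2l.
  by move=> le2; have := leq_trans le1 le2; rewrite leqNgt bm.
- move=> copN; split=> //.
  case: (boolP (prime m.+1)) => Pr; [by left | right].
  split; last (split; first exact: N1); last (split; first exact: Pr); last (split; first exact: cop).
    case ev: (odd m.+1); first done.
    have d2 : 2 %| m.+1 by rewrite dvdn2 ev.
    have oa : odd a by rewrite -coprimen2 (coprime_dvdr d2).
    have ob1 : odd (b - 1) by rewrite -coprime2n (coprime_dvdl d2).
    move: ob1; rewrite oddB; last exact: ltnW.
    by rewrite /b oddX oa orbT.
  apply: (proj2 (cosets_iff m0 cop)) => s s0.
  apply: (order_eq_per h0 per h0 (per s)).
  move=> k k0 kh; apply/negP => /eqP Hk.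
  have : m.+1 %| s * (a ^ k - 1).
    rewrite mulnBr muln1 -eqn_mod_dvd; last by rewrite leq_pmulr // expn_gt0 a1.
    by move: (congr1 val Hk); rewrite iter_mul => ->; rewrite (modn_small (ltn_ord s)).
  case/(exists_prime s0 (ltn_ord s)) => q qp /andP[qN qk].
  have : p ^ n %| k.
    apply: (pord a1 pp n1 qp qN copN _ k0).
      move: Npn; rewrite !eqn_mod_dvd ?expn_gt0 ?a1 // => H.
      exact: dvdn_trans qN H.
    by rewrite eqn_mod_dvd ?expn_gt0 ?a1.
  case/dvdnP => c kE.
  have : a ^ k == 1 %[mod m.+1].
    by rewrite kE mulnC expnM -modnXm (eqP Npn) modnXm exp1n.
  by rewrite (negbTE (hmin k k0 kh)).
Qed.

Theorem theorem7 (a p n : nat) :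
  2 <= a -> prime p -> 1 <= n ->
  primover a ((a ^ (p ^ n) - 1) %/ (a ^ (p ^ n.-1) - 1)) <->
  coprime ((a ^ (p ^ n) - 1) %/ (a ^ (p ^ n.-1) - 1)) (a ^ (p ^ n.-1) - 1).
Proof.
move=> a2 pp n1.
have pn0 : 0 < p ^ n.-1 by rewrite expn_gt0 prime_gt0.
have E : a ^ (p ^ n) = (a ^ (p ^ n.-1)) ^ p by rewrite -expnM -expnSr prednK.
have b2 : 2 <= a ^ (p ^ n.-1) by rewrite -(expn0 a) ltn_exp2l.
case: (Narith b2 (prime_gt1 pp)) => EN bN [t Et].
rewrite E; apply: core => //; first by rewrite -E in EN *.
rewrite Et -(prednK pn0) expnSr mulnA /coprime gcdnMDl gcdn1 //.
Qed.
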